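(* For every $x\in\{0,1\}^{nd/2}$, \[ \lvert \phi^{-1}(x) \rvert \leq (dn)^{dn/2} \cdot \left(\frac{d^2}{n}\right)^{\lvert x\rvert},\] where $\lvert x\rvert=\sum_{j=1}^{nd/2}x(j)$.
   Context: Fix $0<c<1$, $n,d$ with $dn$ even, and $T_{\max}=\binom d2\frac n3$. Let $\mathcal{G}^*_{d,c}(n)$ be the set of $d$-regular graphs on the labeled nodes $\{1,\dots,n\}$ with at least $c\cdot T_{\max}$ triangles, in which additionally at each node the $d$ incident edges are assigned distinct labels $1,\dots,d$ (so each edge carries two labels, one from each endpoint). For $G^*\in\mathcal{G}^*_{d,c}(n)$ define the configuration ordering on its edges: for edges $e=(i_1j_1)$, $f=(i_2j_2)$ with $i_1<j_1$, $i_2<j_2$, set $e\prec f$ if $i_1<i_2$, or if $i_1=i_2$ and the label of $e$ at their common node $i_1$ is smaller than that of $f$. Let $e_1\prec\dots\prec e_{nd/2}$ be the edges in this order and $G^*[k]$ the subgraph with edges $e_1,\dots,e_k$. Define $\phi:\mathcal{G}^*_{d,c}(n)\to\{0,1\}^{nd/2}$ by $\phi(G^* )(k)=1$ if $e_k$ lies in a triangle of $G^*[k]$, and $0$ otherwise. *)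

(* Defs.v *)
From mathcomp Require Import all_boot all_order all_algebra.
Set Implicit Arguments. Unset Strict Implicit. Unset Printing Implicit Defensive.
Import Order.TTheory GRing.Theory Num.Theory.

(* Nodes are 'I_n (i.e. {0,...,n-1}, standing for {1,...,n}); labels are 'I_d.
   An edge-labelled graph Gstar is encoded by its "configuration" map
   nb : 'I_n -> 'I_d -> 'I_n, where nb v k is the neighbour of v reached via
   the edge carrying label k at v.  This is a bijective encoding of
   (simple d-regular graph, labelling of incident edges at every node). *)
Definition config (n d : nat) := {ffun 'I_n -> {ffun 'I_d -> 'I_n}}.

Section Defs.
Variables n d : nat.
Implicit Types (G : config n d).

Definition adj G (u v : 'I_n) : bool := [exists k, G u k == v].

(* validity: the map describes a simple graph with a proper labelling:
   no loops, the d labels at a node go to d distinct neighbours, and the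
   neighbour relation is symmetric (each edge carries one label at each end). *)
Definition valid_config G : bool :=
  [forall v, injectiveb (G v)] &&
  [forall v, forall k, (G v k != v) && adj G (G v k) v].

Definition ntriangles G : nat :=
  #|[set t : {set 'I_n} | (#|t| == 3) &&
       [forall u in t, forall v in t, (u != v) ==> adj G u v]]|.

(* the edges e = (i,j), i<j, listed in the configuration ordering:
   lexicographically by (smaller endpoint i, label of e at i). *)
Definition config_edges G : seq ('I_n * 'I_n) :=
  filter (fun p : 'I_n * 'I_n => (val p.1 < val p.2)%N)
    [seq (i, G i k) | i <- enum 'I_n, k <- enum 'I_d].

Definition in_triangle (E : seq ('I_n * 'I_n)) (e : 'I_n * 'I_n) : bool :=
  let mem_e u w := ((u, w) \in E) || ((w, u) \in E) in
  [exists w, mem_e e.1 w && mem_e e.2 w].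

(* phi(Gstar)(k) (k 0-based here: k stands for index k+1): e_{k+1} lies in a
   triangle of Gstar[k+1]. *)
Definition phi G : {ffun 'I_(n * d %/ 2) -> bool} :=
  [ffun k : 'I_(n * d %/ 2) =>
     let es := config_edges G in
     match drop k es with
     | e :: _ => in_triangle (take k.+1 es) e
     | [::] => false
     end].

Definition weight m (x : {ffun 'I_m -> bool}) : nat := #|[set j | x j]|.

End Defs.

(* G^*_{d,c}(n) with T_max = binom(d,2) n / 3 *)
Definition Gstar (R : realFieldType) (n d : nat) (c : R) : {set config n d} :=
  [set G : config n d | valid_config G &&
     (c * (('C(d, 2))%:R * n%:R / 3%:R) <= (ntriangles G)%:R)%R].

(* Main.v *)
Require Import Defs.
From mathcomp Require Import all_boot all_order all_algebra.
From mathcomp Require Import zify ring.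
Set Implicit Arguments. Unset Strict Implicit. Unset Printing Implicit Defensive.

Section Aux.
Variables n d : nat.
Local Notation P := ('I_n * 'I_d)%type.
Local Notation cfg := (config n d).

Definition Ps : seq P := [seq (i,k) | i <- enum 'I_n, k <- enum 'I_d].

Lemma Ps_enum : enum [the finType of P] = Ps.
Proof. by rewrite enumT unlock. Qed.

Lemma Ps_uniq : uniq Ps.
Proof. by rewrite -Ps_enum enum_uniq. Qed.

Lemma mem_Ps p : p \in Ps.
Proof. by rewrite -Ps_enum mem_enum. Qed.

Definition rk (p : P) := index p Ps.

Lemma map_rk : map (fun p : P => val p.1 * d + val p.2) Ps = iota 0 (n * d).
Proof.
rewrite /Ps map_allpairs.
have -> : [seq (val x * d + val y) | x <- enum 'I_n, y <- enum 'I_d]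
   = [seq (x * d + y) | x <- map val (enum 'I_n), y <- map val (enum 'I_d)].
  by rewrite allpairs_mapl allpairs_mapr.
rewrite !val_enum_ord.
elim: n => [|m IH] //.
rewrite -addn1 iotaD allpairs_cat IH /= cats0 !add0n mulnDl mul1n iotaD add0n.
congr (_ ++ _); by rewrite -(addn0 (m*d)) iotaDl addn0.
Qed.

Lemma rkE (p : P) : rk p = val p.1 * d + val p.2.
Proof.
have h := map_rk.
have hi : rk p < size Ps by rewrite /rk index_mem mem_Ps.
have := congr1 (fun s => nth 0 s (rk p)) h.
rewrite (nth_map p) // nth_index ?mem_Ps // nth_iota; last first.
  by rewrite -(size_iota 0 (n*d)) -h size_map.
by rewrite add0n => ->.
Qed.

Lemma rk_lt1 (p q : P) : val p.1 < val q.1 -> rk p < rk q.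
Proof.
rewrite !rkE => h; have h2 : val p.2 < d := ltn_ord p.2.
move: h h2; move: (val p.1) (val p.2) (val q.1) (val q.2) => a b c e h1 h2.
have : (a.+1) * d <= c * d by rewrite leq_mul2r h1 orbT.
rewrite mulSn; lia.
Qed.

Lemma rk_inj : injective rk.
Proof. move=> p q h; by rewrite -(nth_index p (mem_Ps p)) -(nth_index p (mem_Ps q)); rewrite /rk in h; rewrite h. Qed.

Variable G : cfg.

Definition fwd (p : P) : bool := val p.1 < val (G p.1 p.2).
Definition Fs := filter fwd Ps.
Definition ed (p : P) := (p.1, G p.1 p.2).

Lemma es_eq : config_edges G = map ed Fs.
Proof.
rewrite /config_edges /Fs.
have -> : [seq (i, G i k) | i <- enum 'I_n, k <- enum 'I_d] = map ed Ps by rewrite /Ps map_allpairs.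
by rewrite filter_map.
Qed.

Definition plab (p : P) := odflt p.2 [pick k | G (G p.1 p.2) k == p.1].

Hypothesis vG : valid_config G.

Lemma vinj v : injective (G v).
Proof. by case/andP: vG => /forallP /(_ v) /injectiveP. Qed.

Lemma vnl v k : G v k != v.
Proof. by case/andP: vG => _ /forallP /(_ v) /forallP /(_ k) /andP []. Qed.

Lemma vadj v k : exists k', G (G v k) k' = v.
Proof.
case/andP: vG => _ /forallP /(_ v) /forallP /(_ k) /andP [] _ /existsP [k' /eqP h].
by exists k'.
Qed.

Lemma plabP p : G (G p.1 p.2) (plab p) = p.1.
Proof.
rewrite /plab; case: pickP => [k /eqP //|h].
by have [k' hk] := vadj p.1 p.2; move: (h k'); rewrite hk eqxx.
Qed.

Lemma fwd_or_bwd p : fwd p || (val (G p.1 p.2) < val p.1).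
Proof. have := vnl p.1 p.2; rewrite /fwd neq_ltn => /orP [] -> //; by rewrite orbT. Qed.

Lemma card_fwd : #|[pred p : P | fwd p]| = n * d %/ 2.
Proof.
set F := [set p : P | fwd p].
set B := [set p : P | val (G p.1 p.2) < val p.1].
have -> : #|[pred p : P | fwd p]| = #|F| by apply: eq_card => p; rewrite /F inE.
pose sig := fun p : P => (G p.1 p.2, plab p).
have sinj : injective sig.
  move=> [p1 p2] [q1 q2]; rewrite /sig /= => -[h1 h2].
  have e1 : p1 = q1.
    have := plabP (p1,p2); have := plabP (q1,q2); rewrite /= h1 h2 => -> //.
  subst q1; congr pair; exact: (vinj h1).
have sub : sig @: F \subset B.
  apply/subsetP => y /imsetP [p hp ->]; rewrite inE in hp; rewrite inE /= plabP //.
have sub2 : sig @: B \subset F.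
  apply/subsetP => y /imsetP [p hp ->]; rewrite inE in hp; rewrite inE /fwd /= plabP //.
have hFB := subset_leq_card sub; rewrite card_imset // in hFB.
have hBF := subset_leq_card sub2; rewrite card_imset // in hBF.
have dis : [disjoint F & B].
  apply/pred0P => p /=; rewrite !inE /fwd; apply/negP => /andP [h1 h2]; move: h1 h2; lia.
have [_ hU0] := leq_card_setU F B; rewrite dis in hU0; move/eqP: hU0 => hU.
have hT : F :|: B = setT.
  apply/setP => p; rewrite !inE; exact: fwd_or_bwd.
move: hU; rewrite hT cardsT card_prod !card_ord => h.
have -> : n * d = #|F| * 2 by lia.
by rewrite mulnK.
Qed.

Lemma size_Fs : size Fs = n * d %/ 2.
Proof.
rewrite -card_fwd /Fs size_filter cardE /enum_mem size_filter -enumT Ps_enum.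
by [].
Qed.

Lemma index_filter (T : eqType) (a : pred T) (s : seq T) x :
  a x -> index x (filter a s) = count a (take (index x s) s).
Proof.
move=> ax; elim: s => [|y s IH] //=.
case: (eqVneq y x) => [->|ne]; first by rewrite ax /= eqxx.
case ay: (a y) => /=; by rewrite ?(negbTE ne) /= ?ay IH.
Qed.

Lemma mem_take_index (T : eqType) (s : seq T) k q : q \in take k s -> index q s < k.
Proof.
move=> h; rewrite -(cat_take_drop k s) index_cat h.
rewrite -index_mem in h; apply: leq_trans h _; rewrite size_take; case: ltnP => //.
Qed.

Lemma Fs_sorted : sorted (relpre rk ltn) Fs.
Proof.
apply: sorted_filter; first by move=> a b c /= h1 h2; apply: ltn_trans h1 h2.
rewrite -sorted_map.
have -> : map rk Ps = iota 0 (n*d) by rewrite -map_rk; apply: eq_map => p; rewrite rkE.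
exact: iota_ltn_sorted.
Qed.

Lemma Fs_nth_lt x0 i j : i < j -> j < size Fs -> rk (nth x0 Fs i) < rk (nth x0 Fs j).
Proof.
move=> hij hj.
have := sorted_ltn_nth _ x0 Fs_sorted; apply => //; last by rewrite inE; exact: ltn_trans hij hj.
by move=> a b c /= h1 h2; apply: ltn_trans h1 h2.
Qed.

End Aux.

Section Code.
Variables n d : nat.
Local Notation P := ('I_n * 'I_d)%type.
Local Notation cfg := (config n d).
Local Notation m := (n * d %/ 2).

Definition BeforeB (G : cfg) (b a : P) : bool :=
  [exists c : P, [&& fwd G c, rk c < rk b &
     (c == a) || ((G c.1 c.2 == a.1) && (G a.1 a.2 == c.1))]].

Definition Q (G : cfg) (b : P) (kk : 'I_d * 'I_d) : bool :=
  [&& G (G b.1 kk.1) kk.2 == G b.1 b.2, BeforeB G b (b.1, kk.1)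
    & BeforeB G b (G b.1 kk.1, kk.2)].

Definition code (G : cfg) : {ffun 'I_m -> option ('I_d * ('I_n + ('I_d * 'I_d)))} :=
  [ffun t : 'I_m => match drop t (Fs G) with
   | b :: _ => Some (plab G b, if phi G t then
                 (if [pick kk | Q G b kk] is Some kk then inr kk else inl (G b.1 b.2))
               else inl (G b.1 b.2))
   | [::] => None end].

Lemma codeE (G : cfg) (t : 'I_m) : code G t = match drop t (Fs G) with
   | b :: _ => Some (plab G b, if phi G t then
                 (if [pick kk | Q G b kk] is Some kk then inr kk else inl (G b.1 b.2))
               else inl (G b.1 b.2))
   | [::] => None end.
Proof. by rewrite ffunE. Qed.

Lemma code_idx (G : cfg) c : valid_config G -> c \in Fs G ->
  exists u : 'I_m, val u = index c (Fs G) /\ drop u (Fs G) = c :: drop u.+1 (Fs G).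
Proof.
move=> vG hc.
have hi : index c (Fs G) < size (Fs G) by rewrite index_mem.
have hm : index c (Fs G) < m by rewrite -(size_Fs vG).
exists (Ordinal hm); split => //=.
by rewrite (drop_nth c hi) nth_index.
Qed.

Lemma same_index (G G' : cfg) c :
  (forall q : P, rk q < rk c -> G q.1 q.2 = G' q.1 q.2) -> fwd G c -> fwd G' c ->
  index c (Fs G) = index c (Fs G').
Proof.
move=> IH h h'; rewrite /Fs !index_filter //; apply: eq_in_count => q hq.
by rewrite /fwd IH //; apply: mem_take_index hq.
Qed.

Lemma triangle (G : cfg) (t : 'I_m) b s : valid_config G -> phi G t ->
  drop t (Fs G) = b :: s -> exists kk, Q G b kk.
Proof.
move=> vG; rewrite /phi ffunE es_eq -map_drop => + hd; rewrite hd /= -map_take.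
have ht : t < size (Fs G).
  by rewrite ltnNge; apply/negP => /drop_oversize; rewrite hd.
have hb : nth b (Fs G) t = b by move: hd; rewrite (drop_nth b ht) => -[].
have memE : forall u w, (u, w) \in map (ed G) (take t.+1 (Fs G)) ->
    exists c : P, [/\ fwd G c, c = b \/ rk c < rk b, c.1 = u & G c.1 c.2 = w].
  move=> u w /mapP [c hc [-> ->]]; exists c; split => //.
    by have := mem_take hc; rewrite mem_filter => /andP [].
  move: hc; rewrite (take_nth b ht) hb mem_rcons inE => /orP [/eqP -> | hc]; first by left.
  right.
  have hi : index c (take t (Fs G)) < t.
    by apply: leq_trans (_ : _ < size (take t (Fs G))) _; rewrite ?index_mem // size_take ht.
  have <- : nth b (Fs G) (index c (take t (Fs G))) = c.
    by rewrite -(nth_take b hi) nth_index.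
  by rewrite -{2}hb; apply: Fs_nth_lt.
have nol : forall u, (u, u) \in map (ed G) (take t.+1 (Fs G)) -> False.
  move=> u /memE [c [hf _ h1 h2]]; move: hf; rewrite /fwd h2 h1 ltnn //.
have fb : fwd G b.
  by have := mem_nth b ht; rewrite hb /Fs mem_filter => /andP [].
rewrite /in_triangle => /existsP [w /andP [h1 h2]] /=.
have e1 : (ed G b).1 = b.1 by []. have e2 : (ed G b).2 = G b.1 b.2 by [].
rewrite e1 e2 in h1 h2.
have [k1 [hk1 B1]] : exists k1, G b.1 k1 = w /\ BeforeB G b (b.1, k1).
  case/orP: h1 => /memE [c [hfc hpos hc1 hc2]].
  - have hcb : c <> b.
      move=> e; subst c; move: h2; rewrite hc2 => /orP [] /nol //.
    have hr : rk c < rk b by case: hpos.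
    exists c.2; split; first by rewrite -hc1.
    apply/existsP; exists c; rewrite hfc hr /=; apply/orP; left.
    by rewrite -hc1; case: (c) => ? ?.
    have hcb : c <> b by move=> e; subst c; move: fb; rewrite /fwd hc2 ltnn.
    have hr : rk c < rk b by case: hpos.
    have [k1 hk1] := vadj vG c.1 c.2; rewrite hc2 hc1 in hk1.
    exists k1; split => //.
    apply/existsP; exists c; rewrite hfc hr /=; apply/orP; right.
    by rewrite hc2 hk1 hc1 !eqxx.
have [k2 [hk2 B2]] : exists k2, G w k2 = G b.1 b.2 /\ BeforeB G b (w, k2).
  case/orP: h2 => /memE [c [hfc hpos hc1 hc2]].
  - have hcb : c <> b by move=> e; subst c; move: fb; rewrite /fwd -hc1 ltnn.
    have hr : rk c < rk b by case: hpos.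
    have [k2 hk2] := vadj vG c.1 c.2; rewrite hc2 hc1 in hk2.
    exists k2; split => //.
    apply/existsP; exists c; rewrite hfc hr /=; apply/orP; right.
    by rewrite hc2 hk2 hc1 !eqxx.
  - have hcb : c <> b.
      move=> e; subst c; move: h1; rewrite hc1 => /orP [] /nol //.
    have hr : rk c < rk b by case: hpos.
    exists c.2; split; first by rewrite -hc1 hc2.
    apply/existsP; exists c; rewrite hfc hr /=; apply/orP; left.
    by rewrite -hc1; case: (c) => ? ?.
exists (k1, k2); rewrite /Q /= hk1 hk2 eqxx B1 /=; by [].
Qed.

End Code.

Section Inj.
Variables n d : nat.
Local Notation P := ('I_n * 'I_d)%type.
Local Notation cfg := (config n d).
Local Notation m := (n * d %/ 2).
Variables G G' : cfg.
Hypotheses (vG : valid_config G) (vG' : valid_config G').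
Hypotheses (hphi : phi G = phi G') (hcode : code G = code G').

Lemma fs_mem (H : cfg) c : fwd H c -> c \in Fs H.
Proof. by move=> h; rewrite mem_filter h mem_Ps. Qed.

Lemma Lbef (p a : P) : (forall q : P, rk q < rk p -> G q.1 q.2 = G' q.1 q.2) ->
  BeforeB G p a -> G a.1 a.2 = G' a.1 a.2.
Proof.
move=> IH /existsP [c /and3P [hf hr /orP hor]].
case: hor => [/eqP <- | /andP [/eqP e1 /eqP e2]]; first exact: IH.
have IHc : forall q : P, rk q < rk c -> G q.1 q.2 = G' q.1 q.2.
  by move=> q hq; apply: IH; apply: ltn_trans hq hr.
have eGc := IH c hr.
have hf' : fwd G' c by rewrite /fwd -eGc.
have [u [hu hdu]] := code_idx vG (fs_mem hf).
have [u' [hu' hdu']] := code_idx vG' (fs_mem hf').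
have uu : u = u' by apply: val_inj; rewrite hu hu'; apply: same_index.
subst u'.
move/ffunP/(_ u): hcode; rewrite !codeE hdu hdu' => -[hpl _].
have pl : plab G c = a.2.
  apply: (vinj vG (v := a.1)); rewrite -{1}e1 plabP //.
have := plabP vG' c; rewrite -eGc e1 -hpl pl => ->; by [].
Qed.

Lemma bwd_case (p : P) : (forall q : P, rk q < rk p -> G q.1 q.2 = G' q.1 q.2) ->
  val (G p.1 p.2) < val p.1 -> G p.1 p.2 = G' p.1 p.2.
Proof.
move=> IH hb; apply: (Lbef IH); apply/existsP; exists (G p.1 p.2, plab G p).
rewrite /fwd /= plabP // hb (rk_lt1 (q := p)) //= !eqxx orbT //.
Qed.

End Inj.

Lemma code_inj n d (G G' : config n d) : valid_config G -> valid_config G' ->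
  phi G = phi G' -> code G = code G' -> G = G'.
Proof.
move=> vG vG' hphi hcode.
have key : forall r (p : 'I_n * 'I_d), rk p < r -> G p.1 p.2 = G' p.1 p.2.
  elim=> [//|r IHr] p hp.
  case: (ltnP (rk p) r) => [/IHr //| hge].
  have IH : forall q : 'I_n * 'I_d, rk q < rk p -> G q.1 q.2 = G' q.1 q.2.
    move=> q hq; apply: IHr; apply: leq_trans hq _; lia.
  have IH' : forall q : 'I_n * 'I_d, rk q < rk p -> G' q.1 q.2 = G q.1 q.2.
    by move=> q /IH ->.
  case/orP: (fwd_or_bwd vG p) => hf; last exact: bwd_case.
  case/orP: (fwd_or_bwd vG' p) => hf'; last first.
    have e := bwd_case vG' vG (esym hcode) IH' hf'.
    by move: hf'; rewrite e; move: hf; rewrite /fwd; lia.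
  have [u [hu hdu]] := code_idx vG (fs_mem hf).
  have [u' [hu' hdu']] := code_idx vG' (fs_mem hf').
  have uu : u = u' by apply: val_inj; rewrite hu hu'; apply: same_index.
  subst u'.
  have hph : phi G u = phi G' u by rewrite hphi.
  move/ffunP/(_ u): (hcode); rewrite !codeE hdu hdu' -hph.
  case hpu: (phi G u) => /=; last by case=> _ [].
  have [kk hkk] := triangle vG hpu hdu.
  case: pickP => [kk0 hkk0|/(_ kk)]; last by rewrite hkk.
  case: pickP => [kk1 hkk1|_]; last by case.
  case=> _ ekk; subst kk1.
  case/and3P: hkk0 => /eqP h1 B1 B2.
  case/and3P: hkk1 => /eqP h1' _ _.
  have e1 := Lbef vG vG' hcode IH B1.
  have e2 := Lbef vG vG' hcode IH B2.
  rewrite /= in e1 e2.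
  by rewrite -h1 -h1' -e1.
apply/ffunP => i; apply/ffunP => k; exact: (key (rk (i, k)).+1 (i, k) (ltnSn _)).
Qed.

Lemma card_fam (m : nat) (C : finType) (F : 'I_m -> {set C}) :
  #|[set f : {ffun 'I_m -> C} | [forall t, f t \in F t]]| = \prod_(t < m) #|F t|.
Proof.
have := card_family (fun t => mem (F t)).
rewrite foldrE big_map big_enum /= => <-.
apply: eq_card => f; rewrite inE; apply/forallP/familyP => h t; exact: h.
Qed.

Lemma count_bound (R : realFieldType) (c : R) (n d : nat)
  (x : {ffun 'I_(n * d %/ 2) -> bool}) :
  #|[set G in Gstar n d c | phi G == x]| <=
    \prod_(t < n * d %/ 2) (if x t then d * (d * d) else d * n).
Proof.
pose Cd := ('I_d * ('I_n + ('I_d * 'I_d)))%type.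
pose F := fun t : 'I_(n * d %/ 2) =>
  if x t then (fun p : 'I_d * ('I_d * 'I_d) => (Some (p.1, inr p.2) : option Cd)) @: setT
  else (fun p : 'I_d * 'I_n => (Some (p.1, inl p.2) : option Cd)) @: setT.
have cF : forall t, #|F t| = if x t then d * (d * d) else d * n.
  move=> t; rewrite /F; case: (x t).
    rewrite card_imset ?cardsT ?card_prod ?card_ord //.
    by move=> [a1 a2] [b1 b2] [-> ->].
  rewrite card_imset ?cardsT ?card_prod ?card_ord //.
  by move=> [a1 a2] [b1 b2] [-> ->].
rewrite -(eq_bigr _ (fun t _ => cF t)) -card_fam.
set S := [set G in Gstar n d c | phi G == x].
have vS : forall G, G \in S -> valid_config G /\ phi G = x.
  by move=> G; rewrite !inE => /andP [/andP [-> _] /eqP ->].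
have injS : {in S &, injective (@code n d)}.
  move=> G G' /vS [vG hG] /vS [vG' hG'] hc; apply: code_inj => //; by rewrite hG hG'.
rewrite -(card_in_imset injS); apply: subset_leq_card; apply/subsetP => f /imsetP [G hG ->].
have [vG hx] := vS G hG.
rewrite inE; apply/forallP => t; rewrite codeE /F.
case hd: (drop t (Fs G)) => [|b s].
  exfalso; move/eqP: hd; rewrite -size_eq0 size_drop (size_Fs vG).
  by have := ltn_ord t; lia.
rewrite hx; case hxt: (x t).
  have [kk hkk] : exists kk, Q G b kk by apply: (triangle (t := t) vG _ hd); rewrite hx hxt.
  case: pickP => [kk0 _|/(_ kk)]; last by rewrite hkk.
  by apply/imsetP; exists (plab G b, kk0).
by apply/imsetP; exists (plab G b, G b.1 b.2).
Qed.

Import Order.TTheory GRing.Theory Num.Theory.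
Local Open Scope ring_scope.

Theorem lemma1 (R : realFieldType) (c : R) (n d : nat) :
  0 < c -> c < 1 -> ~~ odd (d * n) ->
  forall x : {ffun 'I_(n * d %/ 2) -> bool},
    (#|[set G in Gstar n d c | phi G == x]|%:R : R) <=
      ((d * n)%:R) ^+ (d * n %/ 2) * ((d ^ 2)%:R / n%:R) ^+ (weight x).
Proof.
move=> _ _ _ x.
apply: le_trans (_ : (\prod_(t < n * d %/ 2) (if x t then d * (d * d) else d * n)%N)%:R <= _).
  by rewrite ler_nat count_bound.
rewrite natr_prod /weight -prodr_const [in X in _ ^+ X](mulnC d n).
have -> : ((d * n)%:R : R) ^+ (n * d %/ 2) = \prod_(t < n * d %/ 2) (d * n)%:R.
  by rewrite prodr_const card_ord.
rewrite (big_mkcond (fun t => t \in _)) /= -big_split /=.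
rewrite le_eqVlt; apply/orP; left; apply/eqP; apply: eq_bigr => t _.
rewrite inE; case: (x t); last by rewrite mulr1.
have hn : (n%:R : R) != 0.
  rewrite pnatr_eq0; apply/eqP => hn0; have ht := ltn_ord t.
  have h0 : ((n * d) %/ 2)%N = 0%N by rewrite hn0 mul0n div0n.
  by move: ht; rewrite {2}h0.
rewrite !natrM ?natrX; field; exact: hn.
Qed.
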